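(* Consider the homogeneous tightly-feasible interference channel $[(N,M)^K]$ (all RXs have $N$ antennas, all TXs have $M$ antennas, with $M+N=K+1$), and assume $M\neq 1$ and $M\neq K$. Then there is no pair $(\mathcal S_{\mathrm{RX}},\mathcal S_{\mathrm{TX}})$ of subsets of $\mathcal K$, other than $(\emptyset,\emptyset)$ and $(\mathcal K,\mathcal K)$, satisfying $\mathcal N_{\mathrm{Var}}(\mathcal S_{\mathrm{RX}},\mathcal S_{\mathrm{TX}})=\mathcal N_{\mathrm{Eq}}(\mathcal S_{\mathrm{RX}},\mathcal S_{\mathrm{TX}})$ (i.e. no strictly included generalized tightly-feasible sub-IC).
   Context: $\mathcal K=\{1,\dots,K\}$, $K\ge2$. For $\mathcal S_{\mathrm{RX}},\mathcal S_{\mathrm{TX}}\subseteq\mathcal K$, with $N_i=N$ and $M_i=M$ for all $i$: $\mathcal N_{\mathrm{Var}}(\mathcal S_{\mathrm{RX}},\mathcal S_{\mathrm{TX}})=\sum_{i\in\mathcal S_{\mathrm{RX}}}(N_i-1)+\sum_{i\in\mathcal S_{\mathrm{TX}}}(M_i-1)$ and $\mathcal N_{\mathrm{Eq}}(\mathcal S_{\mathrm{RX}},\mathcal S_{\mathrm{TX}})=\#\{(j,k): j\in\mathcal S_{\mathrm{RX}},k\in\mathcal S_{\mathrm{TX}},j\ne k\}$. A generalized sub-IC is the interference channel formed by a subset of RXs and a subset of TXs (not necessarily paired); it is tightly-feasible when $\mathcal N_{\mathrm{Var}}=\mathcal N_{\mathrm{Eq}}$ for its pair of sets. *)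

(* Defs.v *)
(* Users/indices 1..K are represented by 'I_K (values 0..K-1). *)
From mathcomp Require Import all_boot.
Set Implicit Arguments. Unset Strict Implicit. Unset Printing Implicit Defensive.

(* Homogeneous channel: N_i = N and M_i = M for every user i. *)
Definition NVar (K N M : nat) (SRX STX : {set 'I_K}) : nat :=
  \sum_(i in SRX) (N - 1) + \sum_(i in STX) (M - 1).

Definition NEq (K : nat) (SRX STX : {set 'I_K}) : nat :=
  #|[set p : 'I_K * 'I_K | (p.1 \in SRX) && (p.2 \in STX) && (p.1 != p.2)]|.

(* Main.v *)
Require Import Defs.
From mathcomp Require Import all_boot.
From Stdlib Require Import ZArith Lia Psatz.
From mathcomp Require Import zify.

Lemma neq_card (K : nat) (A B : {set 'I_K}) :
  NEq A B + #|A :&: B| = #|A| * #|B|.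
Proof.
rewrite /NEq -cardsX.
set S := [set p : 'I_K * 'I_K | _].
have -> : S = setX A B :\: [set p | p.1 == p.2].
  by apply/setP => p; rewrite !inE; case: (p.1 \in A); case: (p.2 \in B); case: (p.1 != p.2).
have -> : #|A :&: B| = #|setX A B :&: [set p | p.1 == p.2]|.
  have -> : setX A B :&: [set p | p.1 == p.2] = (fun i => (i, i)) @: (A :&: B).
    apply/setP => [[i j]]; rewrite !inE /=; apply/idP/imsetP.
      by case/andP=> /andP[iA jB] /eqP ij; subst j; exists i => //; rewrite !inE iA.
    by case=> k; rewrite !inE => /andP[kA kB] [-> ->]; rewrite kA kB eqxx.
  by rewrite card_imset // => x y [].
by rewrite addnC cardsID.
Qed.
Local Open Scope Z_scope.
Lemma arithZ (a b c K M : Z) : 2 <= M -> M + 1 <= K -> 0 <= c ->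
  c <= a -> c <= b -> a + b <= K + c -> a <= K -> b <= K -> 0 <= a -> 0 <= b ->
  a*(K-M) + b*(M-1) + c = a*b -> (a = 0 /\ b = 0) \/ (a = K /\ b = K).
Proof.
intros.
assert (E : (a - (M-1))*(b - (K-M)) = c + (M-1)*(K-M)) by nia.
assert (P : 0 < (M-1)*(K-M)) by nia.
destruct (Z_le_gt_dec (a - (M-1)) 0) as [Hx|Hx].
- assert (Hy : b - (K-M) < 0) by nia.
  left. assert ((a - (M-1))*(b - (K-M)) <= (M-1)*(K-M)) by nia.
  assert (c = 0) by lia.
  nia.
- assert (Hy : b - (K-M) > 0) by nia.
  right.
  assert ((K-a)*(K-b) >= (K-b)*(K-M) + (K-a)*(M-1)) by nia.
  assert ((K-a)*(K-b) <= (K-b)*(K-M)) by nia.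
  assert ((K-a)*(K-b) <= (K-a)*(M-1)) by nia.
  nia.
Qed.
Local Close Scope Z_scope.

Theorem corollary1 (K N M : nat) (hK : 2 <= K) (hN : 1 <= N) (hM : 1 <= M)
  (htight : M + N = K + 1) (hM1 : M <> 1) (hMK : M <> K)
  (SRX STX : {set 'I_K}) :
  NVar N M SRX STX = NEq SRX STX ->
  (SRX = set0 /\ STX = set0) \/ (SRX = setT /\ STX = setT).
Proof.
rewrite /NVar !sum_nat_const => H.
have HE := @neq_card K SRX STX.
have HU := cardsUI SRX STX.
have HUK : #|SRX :|: STX| <= K by rewrite -[X in _ <= X]card_ord max_card.
have HIa : #|SRX :&: STX| <= #|SRX| by apply: subset_leq_card; apply: subsetIl.
have HIb : #|SRX :&: STX| <= #|STX| by apply: subset_leq_card; apply: subsetIr.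
have Ha : #|SRX| <= K by rewrite -[X in _ <= X]card_ord max_card.
have Hb : #|STX| <= K by rewrite -[X in _ <= X]card_ord max_card.
move: H HE HU HUK HIa HIb Ha Hb.
set a := #|SRX|; set b := #|STX|; set c := #|SRX :&: STX|; set u := #|SRX :|: STX|.
move=> H HE HU HUK HIa HIb Ha Hb.
have HNK : N - 1 = K - M by lia.
rewrite HNK in H.


have : ((Z.of_nat a = 0 /\ Z.of_nat b = 0) \/ (Z.of_nat a = Z.of_nat K /\ Z.of_nat b = Z.of_nat K))%Z.
  apply: (@arithZ (Z.of_nat a) (Z.of_nat b) (Z.of_nat c) (Z.of_nat K) (Z.of_nat M)); lia.
case=> [[ha hb] | [ha hb]].
  have {}ha : a = 0 by lia. have {}hb : b = 0 by lia.
  by left; split; apply/eqP; rewrite -cards_eq0; apply/eqP; [exact ha|exact hb].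
have {}ha : a = K by lia. have {}hb : b = K by lia.
by right; split; apply/eqP; rewrite eqEcard subsetT cardsT card_ord /=; [rewrite -/a ha | rewrite -/b hb].
Qed.
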